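(* Let $K$ be a field and $X$ a finite connected poset. For every Lie automorphism $\varphi$ of $I(X,K)$, the map $\widetilde\varphi$ is a bijective $K$-linear map of $I(X,K)$, and $\varphi\mapsto\widetilde\varphi$ is a group homomorphism from $\mathrm{LAut}(I(X,K))$ to $\mathrm{GL}(I(X,K))$, i.e. $\widetilde{\varphi\circ\psi}=\widetilde\varphi\circ\widetilde\psi$.
   Context: $I(X,K)$ is the incidence algebra: functions $f:X\times X\to K$ with $f(x,y)=0$ unless $x\le y$, product $(fg)(x,y)=\sum_{x\le t\le y}f(x,t)g(t,y)$; $e_{xy}$ ($x\le y$) is the basis element equal to $1$ at $(x,y)$ and $0$ elsewhere. $\mathrm{LAut}(I(X,K))$ is the group of bijective linear maps preserving $[f,g]=fg-gf$; $\mathrm{GL}(I(X,K))$ is the group of bijective $K$-linear maps. Let $l(\lfloor x,y\rfloor)$ be the maximum length of a chain in $\{z:x\le z\le y\}$, $L_i=\mathrm{span}_K\{e_{xy}: l(\lfloor x,y\rfloor)=i\}$ ($i\ge 0$), so $I(X,K)=\bigoplus_i L_i$. For $\varphi\in\mathrm{LAut}(I(X,K))$, $\widetilde\varphi$ is the linear map sending $e_{xy}\in L_i$ to the $L_i$-component of $\varphi(e_{xy})$ (one has $\varphi(e_{xy})-\widetilde\varphi(e_{xy})\in\bigoplus_{k>i}L_k$). Connected means any two elements are joined by a sequence in which consecutive elements are in a covering relation. *)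

(* Defs.v *)
From HB Require Import structures.
From mathcomp Require Import all_boot all_order all_algebra.
Set Implicit Arguments. Unset Strict Implicit. Unset Printing Implicit Defensive.
Import Order.TTheory GRing.Theory.
Local Open Scope order_scope.

(* Elements of I(X,K) are represented as functions X -> X -> K satisfying
   the support condition [inI]. *)
Section Incidence.
Variables (d : Order.disp_t) (X : finPOrderType d) (K : fieldType).

Definition inI (f : X -> X -> K) : Prop :=
  forall x y : X, ~~ (x <= y) -> f x y = 0%R.

Definition eI (x y : X) : X -> X -> K :=
  fun u v => if (u == x) && (v == y) then 1%R else 0%R.

Definition addI (f g : X -> X -> K) : X -> X -> K := fun u v => (f u v + g u v)%R.
Definition scaleI (a : K) (f : X -> X -> K) : X -> X -> K := fun u v => (a * f u v)%R.

Definition mulI (f g : X -> X -> K) : X -> X -> K :=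
  fun x y => (\sum_(t : X | (x <= t)%O && (t <= y)%O) f x t * g t y)%R.

Definition bracketI (f g : X -> X -> K) : X -> X -> K :=
  fun x y => (mulI f g x y - mulI g f x y)%R.

Definition covers (x y : X) : bool :=
  (x < y) && [forall z : X, ~~ ((x < z) && (z < y))].

Definition poset_connected : Prop :=
  forall x y : X, connect (fun a b => covers a b || covers b a) x y.

Definition is_chain (A : {set X}) : bool :=
  [forall a in A, forall b in A, (a <= b) || (b <= a)].

Definition lint (x y : X) : nat :=
  (\max_(A : {set X} | is_chain A && (A \subset [set z | (x <= z)%O && (z <= y)%O]))
     #|A|.-1)%N.

Definition compL (i : nat) (g : X -> X -> K) : X -> X -> K :=
  fun u v => if (u <= v) && (lint u v == i) then g u v else 0%R.

Definition LieAut (phi : (X -> X -> K) -> (X -> X -> K)) : Prop :=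
  [/\ (forall f, inI f -> inI (phi f)),
      (forall a f g, inI f -> inI g ->
         phi (addI (scaleI a f) g) = addI (scaleI a (phi f)) (phi g)),
      (forall f g, inI f -> inI g -> phi f = phi g -> f = g),
      (forall h, inI h -> exists2 f, inI f & phi f = h) &
      (forall f g, inI f -> inI g -> phi (bracketI f g) = bracketI (phi f) (phi g))].

Definition GLmap (phi : (X -> X -> K) -> (X -> X -> K)) : Prop :=
  [/\ (forall f, inI f -> inI (phi f)),
      (forall a f g, inI f -> inI g ->
         phi (addI (scaleI a f) g) = addI (scaleI a (phi f)) (phi g)),
      (forall f g, inI f -> inI g -> phi f = phi g -> f = g) &
      (forall h, inI h -> exists2 f, inI f & phi f = h)].

Definition tilde (phi : (X -> X -> K) -> (X -> X -> K)) (f : X -> X -> K)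
  : X -> X -> K :=
  fun u v => (\sum_(p : X * X | (p.1 <= p.2)%O)
                f p.1 p.2 * compL (lint p.1 p.2) (phi (eI p.1 p.2)) u v)%R.

End Incidence.

(* Main.v *)
Require Import Defs.
From HB Require Import structures.
From mathcomp Require Import all_boot all_order all_algebra.
From mathcomp Require Import zify.
From Stdlib Require Import FunctionalExtensionality ClassicalEpsilon.
Set Implicit Arguments. Unset Strict Implicit. Unset Printing Implicit Defensive.
Import Order.TTheory GRing.Theory.

Section L.
Variables (d : Order.disp_t) (X : finPOrderType d).

Definition itv (x y : X) := [set z : X | (x <= z)%O && (z <= y)%O].

Lemma lint_ge (x y : X) (A : {set X}) : is_chain A -> A \subset itv x y ->
  (#|A|.-1 <= lint x y)%N.
Proof. move=> h1 h2; rewrite /lint; apply: (@leq_bigmax_cond _ _ (fun A : {set X} => #|A|.-1)); rewrite h1; exact h2. Qed.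

Lemma lint_wit (x y : X) : exists A : {set X},
  [/\ is_chain A, A \subset itv x y & lint x y = #|A|.-1].
Proof.
have h : (0 < #|[pred A : {set X} | is_chain A && (A \subset itv x y)]|)%N.
  apply/card_gt0P; exists set0; rewrite inE /=; apply/andP; split; last exact: sub0set.
  by apply/forall_inP => a; rewrite inE.
have [A hA e] := eq_bigmax_cond (fun A : {set X} => #|A|.-1) h.
move: hA; rewrite inE => /andP[h1 h2]; exists A; split => //; by rewrite -e.
Qed.

Lemma lint_refl (x : X) : lint x x = 0%N.
Proof.
apply/eqP; rewrite -leqn0; apply/bigmax_leqP => A /andP[_ hs].
have : A \subset [set x].
  apply/subsetP => z /(subsetP hs); rewrite !inE => /andP[h1 h2].
  by apply/eqP; apply: le_anti; rewrite h1 h2.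
by move/subset_leq_card; rewrite cards1; case: #|A| => [|[]].
Qed.

Lemma lint_lt (x y : X) : (x < y)%O -> (1 <= lint x y)%N.
Proof.
move=> lxy; have nxy : x != y by rewrite lt_neqAle in lxy; case/andP: lxy.
have := @lint_ge x y [set x; y]; rewrite cards2 nxy; apply.
  apply/forall_inP => a; rewrite !inE => /orP[]/eqP-> ; apply/forall_inP => b;
  rewrite !inE => /orP[]/eqP->; rewrite ?lexx ?(ltW lxy) ?orbT //.
apply/subsetP => z; rewrite !inE => /orP[]/eqP->; rewrite ?lexx ?(ltW lxy) //.
Qed.

Lemma lint_add (u t v : X) : (u <= t)%O -> (t <= v)%O ->
  (lint u t + lint t v <= lint u v)%N.
Proof.
move=> ut tv.
have [A [cA sA ->]] := lint_wit u t.
have [B [cB sB ->]] := lint_wit t v.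
have hI : (#|A :&: B| <= 1)%N.
  have : A :&: B \subset [set t].
    apply/subsetP => z; rewrite !inE => /andP[/(subsetP sA) + /(subsetP sB)].
    rewrite !inE => /andP[_ h1] /andP[h2 _].
    by apply/eqP; apply: le_anti; rewrite h1 h2.
  by move/subset_leq_card; rewrite cards1.
have hU := cardsUI A B.
have : (#|A :|: B|.-1 <= lint u v)%N.
  apply: lint_ge.
    apply/forall_inP => a; rewrite inE => /orP[] ha; apply/forall_inP => b;
    rewrite inE => /orP[] hb.
    - by move/forall_inP: cA => /(_ a ha)/forall_inP/(_ b hb).
    - move: (subsetP sA a ha) (subsetP sB b hb); rewrite !inE.
      by move=> /andP[_ h1] /andP[h2 _]; rewrite (le_trans h1 h2).
    - move: (subsetP sA b hb) (subsetP sB a ha); rewrite !inE.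
      by move=> /andP[_ h1] /andP[h2 _]; rewrite (le_trans h1 h2) orbT.
    - by move/forall_inP: cB => /(_ a ha)/forall_inP/(_ b hb).
  apply/subsetP => z; rewrite inE => /orP[] hz.
    move: (subsetP sA z hz); rewrite !inE => /andP[-> h]; exact: le_trans h tv.
  move: (subsetP sB z hz); rewrite !inE => /andP[h ->]; by rewrite (le_trans ut h).
have hIA : (#|A :&: B| <= #|A|)%N by apply: subset_leq_card; apply: subsetIl.
have hIB : (#|A :&: B| <= #|B|)%N by apply: subset_leq_card; apply: subsetIr.
move=> H; move: H hU hI hIA hIB; set a := #|A|; set b := #|B|; set c := #|A :|: B|; set e := #|A :&: B|; set l := lint u v; lia.
Qed.

Lemma lint_split (u v : X) k : (k.+1 <= lint u v)%N ->
  exists y, [/\ (u < y)%O, (y <= v)%O & (k <= lint y v)%N].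
Proof.
have [A [cA sA ->]] := lint_wit u v.
move=> hk.
set A' := A :\ u.
have hA' : (k.+1 <= #|A'|)%N by move: hk; rewrite (cardsD1 u A) /A'; case: (u \in A) => /=; lia.
have [y0 y0A] : exists y0, y0 \in A'.
  by apply/set0Pn; rewrite -card_gt0; apply: leq_trans hA'.
pose M := fun y : X => #|[set z : X | (z < y)%O]|.
case: (arg_minnP M y0A) => y yA ymin.
have yA' : y \in A' := yA.
have yA0 : y \in A by move: yA'; rewrite !inE => /andP[].
have [uy yv] : (u <= y)%O /\ (y <= v)%O.
  by move: (subsetP sA y yA0); rewrite inE => /andP[].
have sub : A' \subset itv y v.
  apply/subsetP => z zA'; have zA : z \in A by move: zA'; rewrite inE => /andP[].
  move: (subsetP sA z zA); rewrite !inE => /andP[_ ->]; rewrite andbT.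
  move/forall_inP: cA => /(_ y yA0)/forall_inP/(_ z zA) /orP[] // zy.
  case: (eqVneq z y) => [->|nzy]; first exact: lexx.
  have lzy : (z < y)%O by rewrite lt_neqAle nzy zy.
  have := ymin z zA'; rewrite /M => h.
  have : [set w | (w < z)%O] \proper [set w | (w < y)%O].
    apply/properP; split.
      by apply/subsetP => w; rewrite !inE => h'; apply: lt_trans h' lzy.
    by exists z; rewrite !inE ?lzy // ltxx.
  by move/proper_card; rewrite ltnNge h.
exists y; split => //.
  rewrite lt_neqAle uy andbT; apply/eqP => e; move: yA'; rewrite !inE e eqxx //.
have := lint_ge (A := A') _ sub.
have cA' : is_chain A'.
  apply/forall_inP => a; rewrite inE => /andP[_ ha]; apply/forall_inP => b;
  rewrite inE => /andP[_ hb].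
  by move/forall_inP: cA => /(_ a ha)/forall_inP/(_ b hb).
move=> /(_ cA'); lia.
Qed.

End L.

Local Open Scope ring_scope.

Section M.
Variables (d : Order.disp_t) (X : finPOrderType d) (K : fieldType).
Notation F := (X -> X -> K).
Implicit Types (f g h : F) (phi psi : F -> F).

Lemma fext2 (f g : F) : (forall a b, f a b = g a b) -> f = g.
Proof. by move=> H; do 2 (apply: functional_extensionality => ?); apply: H. Qed.

Definition Fk (k : nat) f := forall a b, f a b != 0 -> ((a <= b)%O && (k <= lint a b)%N).

Lemma Fk_inI k f : Fk k f -> inI f.
Proof. by move=> H a b nab; case: (eqVneq (f a b) 0) => // /H /andP[h _]; rewrite h in nab. Qed.

Lemma inI_Fk0 f : inI f -> Fk 0 f.
Proof. by move=> H a b; rewrite andbT; case: (boolP (a <= b)%O) => // /H ->; rewrite eqxx. Qed.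

Lemma sum_if1 (T : finType) (P : pred T) y (G : T -> K) :
  \sum_(t | P t) (if t == y then G t else 0) = if P y then G y else 0.
Proof.
case Py: (P y).
  rewrite (bigD1 y) //= eqxx big1 ?addr0 // => t /andP[_ /negbTE ->] //.
rewrite big1 // => t Pt; case: eqP => // ety; by rewrite ety Py in Pt.
Qed.

Lemma sum_nz (T : finType) (P : pred T) (G : T -> K) :
  \sum_(t | P t) G t != 0 -> exists t, P t /\ G t != 0.
Proof.
move=> H; suff : [exists t, P t && (G t != 0)] by case/existsP => t /andP[p q]; exists t.
apply: contraR H => /existsPn H.
by rewrite big1 // => t Pt; move: (H t); rewrite Pt /= negbK => /eqP.
Qed.

Lemma mulI_eIl (x y : X) g (u v : X) : mulI (eI K x y) g u v =
  if (u == x) && (u <= y)%O && (y <= v)%O then g y v else 0.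
Proof.
rewrite /mulI /eI.
rewrite (eq_bigr (fun t => if t == y then (if u == x then g t v else 0) else 0)); last first.
  by move=> t _; case: (t == y); case: (u == x); rewrite ?mul1r ?mul0r ?andbF.
rewrite sum_if1; case: (u == x); rewrite ?andbF //=.
by case: ifP.
Qed.

Lemma mulI_eIr (x y : X) g (u v : X) : mulI g (eI K x y) u v =
  if (v == y) && (u <= x)%O && (x <= v)%O then g u x else 0.
Proof.
rewrite /mulI /eI.
rewrite (eq_bigr (fun t => if t == x then (if v == y then g u t else 0) else 0)); last first.
  by move=> t _; case: (t == x); case: (v == y); rewrite ?mulr1 ?mulr0 ?andbF.
rewrite sum_if1; case: (v == y); rewrite ?andbF //=.
by case: ifP.
Qed.

Lemma eI_bracket (x y z : X) : (x <= y)%O -> (y <= z)%O -> x != z ->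
  eI K x z = bracketI (eI K x y) (eI K y z).
Proof.
move=> xy yz nxz; apply: fext2 => u v.
rewrite /bracketI mulI_eIl mulI_eIr /eI.
have nzx : (z == x) = false by rewrite eq_sym (negbTE nxz).
case: (eqVneq u x) => [->|nux] /=.
  rewrite xy /= eqxx (negbTE nxz) !andbF if_same subr0.
  by case: (eqVneq v z) => [->|] /=; rewrite ?yz ?andbF ?if_same //.
by rewrite (negbTE nxz) !andbF !if_same subrr.
Qed.

Definition zeroI : F := fun _ _ => 0.

Lemma inI_eI (x y : X) : (x <= y)%O -> inI (eI K x y).
Proof.
move=> xy u v nuv; rewrite /eI; case: (eqVneq u x) => [eu|] //=; case: (eqVneq v y) => [ev|] //=.
by rewrite eu ev xy in nuv.
Qed.

Lemma inI_add a f g : inI f -> inI g -> inI (addI (scaleI a f) g).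
Proof. by move=> hf hg u v nuv; rewrite /addI /scaleI hf // hg // mulr0 addr0. Qed.

Lemma inI_zero : inI zeroI. Proof. by []. Qed.

Definition Lin phi := forall a f g, inI f -> inI g ->
  phi (addI (scaleI a f) g) = addI (scaleI a (phi f)) (phi g).

Lemma Lin0 phi : Lin phi -> phi zeroI = zeroI.
Proof.
move=> L; have e : zeroI = addI (scaleI (-1) zeroI) zeroI.
  by apply: fext2 => a b; rewrite /addI /scaleI /zeroI mulr0 addr0.
have := L (-1) zeroI zeroI inI_zero inI_zero; rewrite -e => E.
apply: fext2 => a b; have := congr1 (fun h => h a b) E; rewrite /addI /scaleI /zeroI /=.
by rewrite mulN1r addNr.
Qed.

Lemma inI_sum (s : seq (X * X)) (c : X * X -> K) :
  all (fun p => (p.1 <= p.2)%O) s ->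
  inI (fun a b => \sum_(p <- s) c p * eI K p.1 p.2 a b).
Proof.
move=> /allP H u v nuv; rewrite big1_seq // => p /andP[_ ps].
by rewrite inI_eI ?mulr0 //; apply: H.
Qed.

Lemma phi_sum phi (s : seq (X * X)) (c : X * X -> K) : Lin phi ->
  all (fun p => (p.1 <= p.2)%O) s ->
  phi (fun a b => \sum_(p <- s) c p * eI K p.1 p.2 a b) =
  fun a b => \sum_(p <- s) c p * phi (eI K p.1 p.2) a b.
Proof.
move=> L; elim: s => [|p s IH] /=.
  move=> _; have -> : (fun a b : X => \sum_(p <- [::]) c p * eI K p.1 p.2 a b) = zeroI.
    by apply: fext2 => a b; rewrite big_nil.
  by rewrite Lin0 //; apply: fext2 => a b; rewrite big_nil.
move=> /andP[hp hs].
have -> : (fun a b : X => \sum_(q <- p :: s) c q * eI K q.1 q.2 a b) =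
   addI (scaleI (c p) (eI K p.1 p.2)) (fun a b => \sum_(q <- s) c q * eI K q.1 q.2 a b).
  by apply: fext2 => a b; rewrite big_cons.
rewrite L ?IH //; last by [apply: inI_sum]; last by apply: inI_eI.
by apply: fext2 => a b; rewrite big_cons.
Qed.

Lemma phi_sumP phi (P : pred (X * X)) (c : X * X -> K) : Lin phi ->
  (forall p, P p -> (p.1 <= p.2)%O) ->
  phi (fun a b => \sum_(p | P p) c p * eI K p.1 p.2 a b) =
  fun a b => \sum_(p | P p) c p * phi (eI K p.1 p.2) a b.
Proof.
move=> L HP.
have E : forall G : X * X -> K, \sum_(p | P p) G p = \sum_(p <- [seq p <- index_enum (prod X X) | P p]) G p.
  by move=> G; rewrite big_filter.
have -> : (fun a b : X => \sum_(p | P p) c p * eI K p.1 p.2 a b) =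
   (fun a b : X => \sum_(p <- [seq p <- index_enum (prod X X) | P p]) c p * eI K p.1 p.2 a b).
  by apply: fext2 => a b; rewrite E.
rewrite phi_sum //; first by apply: fext2 => a b; rewrite E.
by apply/allP => p; rewrite mem_filter => /andP[/HP].
Qed.

Lemma decomp (P : pred (X * X)) g : (forall a b, g a b != 0 -> P (a, b)) ->
  g = fun a b => \sum_(p | P p) g p.1 p.2 * eI K p.1 p.2 a b.
Proof.
move=> H; apply: fext2 => a b.
rewrite (eq_bigr (fun p => if p == (a, b) then g a b else 0)); last first.
  case=> p1 p2 _ /=; rewrite /eI xpair_eqE.
  case: (eqVneq a p1) => [->|n1]; case: (eqVneq b p2) => [->|n2];
  rewrite ?eqxx /= ?mulr1 ?mulr0 //; rewrite ?(eq_sym p1) ?(eq_sym p2) ?(negbTE n1) ?(negbTE n2) ?andbF //.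
rewrite sum_if1; case Pab: (P (a, b)) => //.
by apply/eqP; apply: contraFT Pab => /H.
Qed.


Lemma mulI_diag f g (u : X) : mulI f g u u = f u u * g u u.
Proof.
rewrite /mulI (eq_bigl (fun t => t == u)) ?big_pred1_eq // => t.
apply/andP/eqP => [[h1 h2]|->]; last by rewrite lexx.
by apply: le_anti; rewrite h1 h2.
Qed.

Lemma bracket_diag f g (u : X) : bracketI f g u u = 0.
Proof. by rewrite /bracketI !mulI_diag mulrC subrr. Qed.

Lemma mulI_nz f g (u v : X) : mulI f g u v != 0 ->
  exists t, [/\ (u <= t)%O, (t <= v)%O, f u t != 0 & g t v != 0].
Proof.
move=> /sum_nz [t [/andP[h1 h2]]]; rewrite mulf_eq0 negb_or => /andP[h3 h4].
by exists t.
Qed.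

Lemma Fk_mul a b f g : Fk a f -> Fk b g -> Fk (a + b) (mulI f g).
Proof.
move=> Hf Hg u v /mulI_nz [t [ut tv /Hf /andP[_ h1] /Hg /andP[_ h2]]].
rewrite (le_trans ut tv) /=; apply: leq_trans (lint_add ut tv).
exact: leq_add.
Qed.

Lemma Fk_bracket a b f g : Fk a f -> Fk b g -> Fk (a + b) (bracketI f g).
Proof.
move=> Hf Hg u v; rewrite /bracketI.
case: (eqVneq (mulI f g u v) 0) => [->|nz1].
  rewrite sub0r oppr_eq0 addnC; exact: (Fk_mul Hg Hf).
move=> _; exact: (Fk_mul Hf Hg nz1).
Qed.

Lemma phi_e1 phi (x y : X) : LieAut phi -> (x < y)%O -> Fk 1 (phi (eI K x y)).
Proof.
case=> Hin Hlin Hinj Hsurj Hbr xy.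
have nxy : x != y by rewrite lt_neqAle in xy; case/andP: xy.
rewrite (eI_bracket (lexx x) (ltW xy) nxy) Hbr ?inI_eI ?lexx ?(ltW xy) //.
move=> a b nz.
have := Fk_bracket (inI_Fk0 (Hin _ (inI_eI (lexx x)))) (inI_Fk0 (Hin _ (inI_eI (ltW xy)))) nz.
case/andP=> ab _; rewrite ab /=; apply: lint_lt.
rewrite lt_neqAle ab andbT; apply: contraNneq nz => ->.
  by rewrite bracket_diag.
all: by apply: inI_eI; rewrite ?lexx ?(ltW xy).
Qed.

Lemma phi_e phi k (x y : X) : LieAut phi -> (x <= y)%O -> (k <= lint x y)%N ->
  Fk k (phi (eI K x y)).
Proof.
move=> LA; have [Hin Hlin Hinj Hsurj Hbr] := LA.
elim: k x y => [|k IH] x y xy hk.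
  exact: inI_Fk0 (Hin _ (inI_eI xy)).
have nxy : x != y by apply: contraTneq hk => ->; rewrite lint_refl.
have lxy : (x < y)%O by rewrite lt_neqAle nxy xy.
case: k IH hk => [|k] IH hk; first exact: phi_e1.
have [z [xz zy hz]] := lint_split hk.
have nxy' : x != y := nxy.
rewrite (eI_bracket (ltW xz) zy nxy) Hbr ?inI_eI ?(ltW xz) //.
have := Fk_bracket (phi_e1 LA xz) (IH z y zy hz).
  by rewrite add1n.
all: by apply: inI_eI; rewrite ?(ltW xz).
Qed.

Lemma phi_Fk phi k g : LieAut phi -> Fk k g -> Fk k (phi g).
Proof.
move=> LA Hg; have [Hin Hlin Hinj Hsurj Hbr] := LA.
have E := decomp (P := fun p => (p.1 <= p.2)%O && (k <= lint p.1 p.2)%N) Hg.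
rewrite E phi_sumP //; last by move=> p /andP[].
move=> a b /sum_nz [p [/andP[h1 h2]]]; rewrite mulf_eq0 negb_or => /andP[_ h3].
exact: (phi_e LA h1 h2).
Qed.


Definition Tm phi f : F :=
  fun u v => if (u <= v)%O then phi (compL (lint u v) f) u v else 0.

Lemma inI_Tm phi f : inI (Tm phi f).
Proof. by move=> u v /negbTE nuv; rewrite /Tm nuv. Qed.

Lemma inI_compL i f : inI (compL i f).
Proof. by move=> u v /negbTE nuv; rewrite /compL nuv. Qed.

Lemma Fk_compL i f : Fk i (compL i f).
Proof.
move=> u v; rewrite /compL; case: ifP => [/andP[-> /eqP ->]|]; first by rewrite leqnn.
by rewrite eqxx.
Qed.

Lemma Fk_rest i g : Fk i g -> Fk i.+1 (fun a b => g a b - compL i g a b).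
Proof.
move=> H a b; rewrite /compL; case: ifP => [_|]; first by rewrite subrr eqxx.
rewrite subr0 => hn /H /andP[ab hi]; rewrite ab /=.
by move: hn; rewrite ab /= ltn_neqAle hi andbT eq_sym => /negbT.
Qed.

Lemma tilde_inI phi f : inI (tilde phi f).
Proof.
move=> u v /negbTE nuv; rewrite /tilde big1 // => p _.
by rewrite /compL nuv mulr0.
Qed.

Lemma tildeE phi f : LieAut phi -> inI f -> tilde phi f = Tm phi f.
Proof.
move=> LA hf; have [Hin Hlin Hinj Hsurj Hbr] := LA.
apply: fext2 => u v; rewrite /Tm; case uv: (u <= v)%O; last first.
  by rewrite /tilde big1 // => p _; rewrite /compL uv mulr0.
set i := lint u v.
have hP : forall a b, compL i f a b != 0 -> (a <= b)%O && (lint a b == i).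
  by move=> a b; rewrite /compL; case: ifP => // _; rewrite eqxx.
have E := decomp (P := fun p => (p.1 <= p.2)%O && (lint p.1 p.2 == i)) hP.
rewrite [in RHS]E phi_sumP //; last by move=> p /andP[].
rewrite /tilde [RHS]big_mkcond [LHS]big_mkcond; apply: eq_bigr => [[p1 p2]] _ /=.
rewrite /compL uv /=; case: (p1 <= p2)%O => //=.
rewrite (eq_sym i); case: eqP => _; by rewrite ?mulr0.
Qed.

Lemma Key phi psi f : LieAut phi -> LieAut psi -> inI f ->
  Tm phi (Tm psi f) = Tm (fun g => phi (psi g)) f.
Proof.
move=> LA LB hf; have [Hin Hlin Hinj Hsurj Hbr] := LA.
apply: fext2 => u v; rewrite /Tm; case uv: (u <= v)%O => //.
set i := lint u v.
have E1 : compL i (Tm psi f) = compL i (psi (compL i f)).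
  apply: fext2 => a b; rewrite /compL /Tm; case: (a <= b)%O => //=.
  by case: eqP => // ->.
rewrite E1.
have Gi : Fk i (psi (compL i f)) := phi_Fk LB (Fk_compL (i:=i) (f:=f)).
set G := psi (compL i f).
have R := Fk_rest Gi.
set Rf := (fun a b => G a b - compL i G a b) in R.
have EG : G = addI (scaleI 1 (compL i G)) Rf.
  by apply: fext2 => a b; rewrite /addI /scaleI /Rf mul1r addrC subrK.
have E2 : phi G = addI (scaleI 1 (phi (compL i G))) (phi Rf).
  rewrite -Hlin -?EG //; [exact: inI_compL | exact: Fk_inI R].
rewrite E2 /addI /scaleI mul1r.
have -> : phi Rf u v = 0.
  apply/eqP; apply: contraT => /(phi_Fk LA R) /andP[_].
  by rewrite /i ltnn.
by rewrite addr0.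
Qed.

Lemma Tm_ext phi phi' f : (forall g, inI g -> phi g = phi' g) -> Tm phi f = Tm phi' f.
Proof. by move=> H; apply: fext2 => u v; rewrite /Tm H //; apply: inI_compL. Qed.

Lemma Tm_id f : inI f -> Tm (fun g => g) f = f.
Proof.
move=> hf; apply: fext2 => u v; rewrite /Tm /compL.
case uv: (u <= v)%O; first by rewrite eqxx.
by rewrite hf // uv.
Qed.

Lemma LA_comp phi psi : LieAut phi -> LieAut psi -> LieAut (fun g => phi (psi g)).
Proof.
case=> Hin Hlin Hinj Hsurj Hbr; case=> Hin' Hlin' Hinj' Hsurj' Hbr'; split.
- by move=> f hf; apply: Hin; apply: Hin'.
- by move=> a f g hf hg; rewrite Hlin' // Hlin //; apply: Hin'.
- move=> f g hf hg /= E; apply: Hinj' => //; by apply: Hinj => //; apply: Hin'.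
- move=> h hh; have [g hg <-] := Hsurj h hh; have [f hf <-] := Hsurj' g hg.
  by exists f.
- move=> f g hf hg /=; rewrite Hbr' // Hbr //; exact: Hin'.
Qed.

Definition invL phi : F -> F :=
  fun h => epsilon (inhabits zeroI) (fun f => inI f /\ phi f = h).

Lemma invL_spec phi h : LieAut phi -> inI h -> inI (invL phi h) /\ phi (invL phi h) = h.
Proof.
case=> Hin Hlin Hinj Hsurj Hbr hh; apply: (epsilon_spec (inhabits zeroI) (fun f => inI f /\ phi f = h)).
by have [f hf e] := Hsurj h hh; exists f.
Qed.

Lemma invL_l phi f : LieAut phi -> inI f -> invL phi (phi f) = f.
Proof.
move=> LA hf; have [Hin Hlin Hinj Hsurj Hbr] := LA.
have [h1 h2] := invL_spec LA (Hin f hf).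
by apply: Hinj.
Qed.

Lemma inI_bracket f g : inI f -> inI g -> inI (bracketI f g).
Proof.
move=> hf hg; apply: (Fk_inI (k := 0)).
exact: (Fk_bracket (inI_Fk0 hf) (inI_Fk0 hg)).
Qed.

Lemma invL_LA phi : LieAut phi -> LieAut (invL phi).
Proof.
move=> LA; have [Hin Hlin Hinj Hsurj Hbr] := LA.
have S := fun h hh => invL_spec (h := h) LA hh.
split.
- by move=> f hf; case: (S f hf).
- move=> a f g hf hg; have [f1 f2] := S f hf; have [g1 g2] := S g hg.
  have [k1 k2] := S _ (inI_add a hf hg).
  apply: Hinj => //; first exact: inI_add.
  by rewrite k2 Hlin // f2 g2.
- move=> f g hf hg E; have [f1 f2] := S f hf; have [g1 g2] := S g hg.
  by rewrite -f2 -g2 E.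
- by move=> h hh; exists (phi h); [exact: Hin | exact: invL_l].
- move=> f g hf hg; have [f1 f2] := S f hf; have [g1 g2] := S g hg.
  have [k1 k2] := S _ (inI_bracket hf hg).
  apply: Hinj => //; first exact: inI_bracket.
  by rewrite k2 Hbr // f2 g2.
Qed.


Lemma tilde_lin phi a f g :
  tilde phi (addI (scaleI a f) g) = addI (scaleI a (tilde phi f)) (tilde phi g).
Proof.
apply: fext2 => u v; rewrite /tilde /addI /scaleI mulr_sumr -big_split /=.
by apply: eq_bigr => p _; rewrite mulrDl mulrA.
Qed.

End M.

Theorem proposition4p2 (d : Order.disp_t) (X : finPOrderType d) (K : fieldType) :
  poset_connected X ->
  (forall phi : (X -> X -> K) -> (X -> X -> K),
      LieAut phi -> GLmap (tilde phi)) /\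
  (forall phi psi : (X -> X -> K) -> (X -> X -> K),
      LieAut phi -> LieAut psi ->
      forall f : X -> X -> K, inI f ->
        tilde (fun g => phi (psi g)) f = tilde phi (tilde psi f)).
Proof.
move=> _; split.
  move=> phi LA; have [Hin Hlin Hinj Hsurj Hbr] := LA.
  have LI := invL_LA LA.
  split.
  - by move=> f _; apply: tilde_inI.
  - by move=> a f g _ _; apply: tilde_lin.
  - move=> f g hf hg E; rewrite !tildeE // in E.
    have : Tm (invL phi) (Tm phi f) = Tm (invL phi) (Tm phi g) by rewrite E.
    rewrite !Key // !(Tm_ext (phi := fun g => invL phi (phi g)) (phi' := fun g => g)) ?Tm_id //.
    1,2: by move=> k hk; exact: invL_l LA hk.
  - move=> h hh; exists (Tm (invL phi) h); first exact: inI_Tm.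
    rewrite tildeE ?Key //; last exact: inI_Tm.
    rewrite (Tm_ext (phi' := fun g => g)) ?Tm_id // => k hk.
    by have [_ ->] := invL_spec LA hk.
move=> phi psi LA LB f hf.
rewrite (tildeE (LA_comp LA LB) hf) (tildeE LB hf) (tildeE LA (inI_Tm psi f)) Key //.
Qed.
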